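(* For all $n^+,n^-\ge0$, the operators $W^+|_{\hbar=1}$ and $W^-|_{\hbar=1}$, restricted to the space of polynomials in $p_k^\pm,q_k$ that are bihomogeneous of bidegree $(n^+,n^-)$, are self-adjoint with respect to the scalar product defined on monomials by $(p_\mu,p_\nu)=\delta_{\mu,\nu}\,\zeta(\mu)$, where for $\mu=(\kappa^+,\kappa^-,\lambda)$, $\lambda=(\ell_1,\ell_2,\dots)$, $$\zeta(\mu)=|\mathrm{Aut}(\kappa^+)|\,|\mathrm{Aut}(\kappa^-)|\,|\mathrm{Aut}(\lambda)|\prod_{j=1}^{\ell(\lambda)}\ell_j$$ and $|\mathrm{Aut}(\nu)|$ denotes the product of the factorials of the multiplicities of the parts of a partition $\nu$. (Equivalently, under $p_\mu\leftrightarrow C_\mu/|C_\mu|$, the scalar product $(C_\mu,C_\nu)=\delta_{\mu\nu}n^+!n^-!|C_\mu|$ on $A_{n^+,n^-}$.)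
   Context: $W^+|_{\hbar=1}=\sum_{i,j\ge1}\big(p_i^{\bar i}p_j^{+}\partial/\partial p_{i+j}^{\bar i}+p_{i+j}^{\bar i}\partial^2/\partial p_i^{\bar i}\partial p_j^{+}\big)+\sum_{i\ge1}\big(i\,p_{2i}^+\partial/\partial q_i+q_i\partial/\partial p_{2i}^+\big)$, where $\bar i$ is $+$ for $i$ even and $-$ for $i$ odd; $W^-$ is obtained from $W^+$ by exchanging $p_k^+\leftrightarrow p_k^-$ for all $k$. Bidegrees: $\mathrm{bdeg}\,p_{2k}^\pm=\mathrm{bdeg}\,q_k=(k,k)$, $\mathrm{bdeg}\,p_{2k+1}^+=(k+1,k)$, $\mathrm{bdeg}\,p_{2k+1}^-=(k,k+1)$. For a triple of partitions $\mu=(\kappa^+,\kappa^-,\lambda)$, $p_\mu=\prod p_{k_i^+}^+\prod p_{k_i^-}^-\prod q_{\ell_i}$. (The algebra $A_{n^+,n^-}$, $C_\mu$, $|C_\mu|$ are as follows: states on $N=N^+\sqcup N^-$ are partitions into singletons and $\{+,-\}$ pairs; transitions are ordered pairs of states; $C_\mu$ is the sum of transitions of type $\mu$, i.e. in the $S(N^+)\times S(N^-)$-orbit labelled by $\mu$, and $|C_\mu|=n^+!n^-!/\zeta(\mu)$ is their number.) *)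

(* Defs.v *)
From HB Require Import structures.
From mathcomp Require Import all_boot all_order all_algebra.
Set Implicit Arguments. Unset Strict Implicit. Unset Printing Implicit Defensive.
Import Order.TTheory GRing.Theory Num.Theory.

(* Variables of the polynomial ring: Pp k = p_k^+, Pm k = p_k^-, Q k = q_k
   (indices k >= 1). *)
Inductive var := Pp of nat | Pm of nat | Q of nat.

Definition var_code (x : var) : nat * nat :=
  match x with Pp k => (0, k) | Pm k => (1, k) | Q k => (2, k) end%N.
Definition var_decode (c : nat * nat) : var :=
  match c with (0, k) => Pp k | (1, k) => Pm k | (_, k) => Q k end%N.
Lemma var_codeK : cancel var_code var_decode. Proof. by case. Qed.
HB.instance Definition _ := Equality.copy var (can_type var_codeK).

Definition idx (x : var) : nat := match x with Pp k | Pm k | Q k => k end.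
Definition valid_var (x : var) : bool := (0 < idx x)%N.

Definition bdeg_var (x : var) : nat * nat :=
  match x with
  | Pp k => if odd k then (k./2.+1, k./2) else (k./2, k./2)
  | Pm k => if odd k then (k./2, k./2.+1) else (k./2, k./2)
  | Q k => (k, k)
  end.

(* A monomial is a finite multiset of variables, represented by a sequence
   (order irrelevant; two monomials are equal iff perm_eq). *)
Definition mono := seq var.
Definition bdeg (m : mono) : nat * nat :=
  (sumn [seq (bdeg_var x).1 | x <- m], sumn [seq (bdeg_var x).2 | x <- m]).

(* A polynomial with rational coefficients, as a formal finite sum of
   coefficient * monomial terms. *)
Definition wpoly := seq (rat * mono).

Local Open Scope ring_scope.

Definition scalep (a : rat) (P : wpoly) : wpoly := [seq (a * t.1, t.2) | t <- P].
Definition mulv (x : var) (P : wpoly) : wpoly := [seq (t.1, x :: t.2) | t <- P].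
Definition dv (x : var) (P : wpoly) : wpoly :=
  [seq (t.1 * (count_mem x t.2)%:R, rem x t.2) | t <- P].

(* p_k^s with sign s (true = +, false = -) *)
Definition pv (s : bool) (k : nat) : var := if s then Pp k else Pm k.

(* W^s |_{hbar=1} applied to a monomial; W true = W^+, W false = W^-
   (W^- is W^+ with p^+ <-> p^- exchanged).  The infinite sums over i, j >= 1
   are truncated at N = sum of indices of m, beyond which all terms vanish. *)
Definition Wmono (s : bool) (m : mono) : wpoly :=
  let N := sumn [seq idx x | x <- m] in
  let one : wpoly := [:: (1, m)] in
  let sg i := if odd i then ~~ s else s in
  let pbar i := pv (sg i) i in
  flatten [seq flatten [seq
       mulv (pbar i) (mulv (pv s j) (dv (pv (sg i) (i + j)%N) one))
    ++ mulv (pv (sg i) (i + j)%N) (dv (pbar i) (dv (pv s j) one))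
    | j <- iota 1 N] | i <- iota 1 N]
  ++ flatten [seq
       scalep i%:R (mulv (pv s (2 * i)%N) (dv (Q i) one))
    ++ mulv (Q i) (dv (pv s (2 * i)%N) one)
    | i <- iota 1 N].

Definition W (s : bool) (P : wpoly) : wpoly :=
  flatten [seq scalep t.1 (Wmono s t.2) | t <- P].

Definition zeta (m : mono) : nat :=
  (\prod_(x <- undup m) (count_mem x m)`! *
   \prod_(x <- m) (match x with Q l => l | _ => 1 end))%N.

Definition mono_sp (m1 m2 : mono) : rat :=
  if perm_eq m1 m2 then (zeta m1)%:R else 0.

Definition sp (P1 P2 : wpoly) : rat :=
  \sum_(a <- P1) \sum_(b <- P2) a.1 * b.1 * mono_sp a.2 b.2.

Definition bihom (np nm : nat) (P : wpoly) : bool :=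
  all (fun t => all valid_var t.2 && (bdeg t.2 == (np, nm))) P.

(* Main.v *)
Require Import Defs.
From mathcomp Require Import all_boot all_order all_algebra.
From mathcomp Require Import zify ring.
Import GRing.Theory.
Set Implicit Arguments. Unset Strict Implicit.

Local Open Scope ring_scope.

Definition wn (x : var) : nat := match x with Q l => l | _ => 1%N end.

Lemma zeta_perm m m' : perm_eq m m' -> zeta m = zeta m'.
Proof.
move=> h; have hc := (permP h); rewrite /zeta; congr (_ * _)%N.
  have hu : perm_eq (undup m) (undup m').
    by apply: uniq_perm; rewrite ?undup_uniq // => x; rewrite !mem_undup (perm_mem h).
  rewrite (perm_big _ hu) /=; apply: eq_bigr => x _; by rewrite hc.
exact: perm_big.
Qed.

Lemma zeta_cons x r : zeta (x :: r) = ((count_mem x r).+1 * zeta r * wn x)%N.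
Proof.
rewrite /zeta big_cons /=.
have -> : (match x with Q l => l | _ => 1 end)%N = wn x by [].
case hx: (x \in r).
  rewrite (bigD1_seq x) ?mem_undup ?undup_uniq //=.
  rewrite [X in _ = (_ * (X * _) * _)%N](bigD1_seq x) ?mem_undup ?undup_uniq //=.
  rewrite eqxx add1n factS.
  rewrite (eq_bigr (fun i => (count_mem i r)`!)); last first.
    by move=> i /negbTE hi; rewrite eq_sym hi.
  ring.
rewrite big_cons /= eqxx (count_memPn (negbT hx)) /=.
rewrite (eq_big_seq (fun i => (count_mem i r)`!)); last first.
  move=> i; rewrite mem_undup => hi /=; case: eqP => // e.
  by rewrite -e hx in hi.
have -> : ((1 + 0)`!)%N = 1%N by []. ring.
Qed.

Lemma mono_cons x m m' :
  mono_sp (x :: m) m' = (wn x)%:R * (count_mem x m')%:R * mono_sp m (rem x m').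
Proof.
rewrite /mono_sp.
case hx: (x \in m'); last first.
  rewrite (count_memPn (negbT hx)) mulr0 mul0r.
  case: ifP => // h; by rewrite -(perm_mem h) mem_head in hx.
have pm := perm_to_rem hx.
have -> : perm_eq (x :: m) m' = perm_eq m (rem x m').
  by rewrite (permPr pm) perm_cons.
case: ifP => h; last by rewrite mulr0.
have h2 : perm_eq (x :: m) m' by rewrite (permPr pm) perm_cons.
rewrite -(permP h2) zeta_cons /= eqxx add1n; rewrite !natrM; ring.
Qed.

Lemma mono_sp_sym m1 m2 : mono_sp m1 m2 = mono_sp m2 m1.
Proof. rewrite /mono_sp perm_sym; case: ifP => // h; by rewrite (zeta_perm h). Qed.

Lemma sp_sym P Q : sp P Q = sp Q P.
Proof.
rewrite /sp exchange_big; apply: eq_bigr => b _; apply: eq_bigr => a _.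
by rewrite mono_sp_sym (mulrC a.1).
Qed.

Lemma sp_mulv x P Q : sp (mulv x P) Q = (wn x)%:R * sp P (dv x Q).
Proof.
rewrite /sp /mulv /dv big_map mulr_sumr; apply: eq_bigr => a _.
rewrite big_map mulr_sumr; apply: eq_bigr => b _ /=; rewrite mono_cons; ring.
Qed.

Lemma sp_scalep c P Q : sp (scalep c P) Q = c * sp P Q.
Proof.
rewrite /sp /scalep big_map mulr_sumr; apply: eq_bigr => a _.
rewrite mulr_sumr; apply: eq_bigr => b _ /=; ring.
Qed.

Lemma sp_cat P1 P2 Q : sp (P1 ++ P2) Q = sp P1 Q + sp P2 Q.
Proof. by rewrite /sp big_cat. Qed.

Lemma sp_flatten L Q : sp (flatten L) Q = \sum_(P <- L) sp P Q.
Proof.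
elim: L => [|P L IH]; first by rewrite big_nil /sp big_nil.
by rewrite /= sp_cat IH big_cons.
Qed.

Lemma wt_pv b k : wn (pv b k) = 1%N.
Proof. by case: b. Qed.

Lemma idx_pv b k : idx (pv b k) = k.
Proof. by case: b. Qed.

Lemma sp_dvr b k P Q : sp P (dv (pv b k) Q) = sp (mulv (pv b k) P) Q.
Proof. by rewrite sp_mulv wt_pv mul1r. Qed.

Lemma mono_sp_perm m1 m1' m2 : perm_eq m1 m1' -> mono_sp m1 m2 = mono_sp m1' m2.
Proof. move=> h; by rewrite /mono_sp (permPl h) (zeta_perm h). Qed.

Lemma sp_mulv_swap a b X Y : sp (mulv a (mulv b X)) Y = sp (mulv b (mulv a X)) Y.
Proof.
rewrite /sp /mulv !big_map; apply: eq_bigr => t _; apply: eq_bigr => u _ /=.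
congr (_ * _); apply: mono_sp_perm.
by rewrite -[a :: b :: _]/([:: a] ++ [:: b] ++ t.2) -[b :: a :: _]/([:: b] ++ [:: a] ++ t.2) perm_catCA.
Qed.

Definition sgn (s : bool) (i : nat) := if odd i then ~~ s else s.
Definition T1 s i j m : wpoly :=
  mulv (pv (sgn s i) i) (mulv (pv s j) (dv (pv (sgn s i) (i + j)) [:: (1, m)])).
Definition T2 s i j m : wpoly :=
  mulv (pv (sgn s i) (i + j)) (dv (pv (sgn s i) i) (dv (pv s j) [:: (1, m)])).
Definition T3 s i m : wpoly :=
  scalep i%:R (mulv (pv s (2 * i)) (dv (Q i) [:: (1, m)])).
Definition T4 s i m : wpoly :=
  mulv (Q i) (dv (pv s (2 * i)) [:: (1, m)]).
Definition Wgen s M m : wpoly :=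
  flatten [seq flatten [seq T1 s i j m ++ T2 s i j m | j <- iota 1 M] | i <- iota 1 M]
  ++ flatten [seq T3 s i m ++ T4 s i m | i <- iota 1 M].

Lemma WmonoE s m : Wmono s m = Wgen s (sumn [seq idx x | x <- m]) m.
Proof. by []. Qed.

Lemma sp_Wgen s M m R : sp (Wgen s M m) R =
  \sum_(i <- iota 1 M) \sum_(j <- iota 1 M) (sp (T1 s i j m) R + sp (T2 s i j m) R)
  + \sum_(i <- iota 1 M) (sp (T3 s i m) R + sp (T4 s i m) R).
Proof.
rewrite /Wgen sp_cat !sp_flatten !big_map; congr (_ + _).
  apply: eq_bigr => i _; rewrite sp_flatten big_map; apply: eq_bigr => j _; exact: sp_cat.
apply: eq_bigr => i _; exact: sp_cat.
Qed.

Definition zc (P : wpoly) := all (fun t => t.1 == 0) P.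

Lemma sp_zc P Q : zc P -> sp P Q = 0.
Proof.
move=> H; rewrite /sp big1_seq // => a /andP [_ aP].
have /eqP -> := allP H a aP; rewrite big1 // => b _; by rewrite !mul0r.
Qed.

Lemma zc_mulv x P : zc P -> zc (mulv x P).
Proof. by move=> H; rewrite /zc /mulv all_map. Qed.

Lemma zc_dv x P : zc P -> zc (dv x P).
Proof.
move=> H; rewrite /zc /dv all_map; apply: sub_all H => t /eqP /= ->.
by rewrite mul0r.
Qed.

Lemma zc_scalep c P : zc P -> zc (scalep c P).
Proof.
move=> H; rewrite /zc /scalep all_map; apply: sub_all H => t /eqP /= ->.
by rewrite mulr0.
Qed.

Lemma zc_dv1 x c m : x \notin m -> zc (dv x [:: (c, m)]).
Proof. by move=> hx; rewrite /zc /= (count_memPn hx) mulr0 eqxx. Qed.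

Lemma idx_le x m : x \in m -> (idx x <= sumn [seq idx y | y <- m])%N.
Proof.
elim: m => //= y m IH; rewrite in_cons => /orP [/eqP -> | /IH]; lia.
Qed.

Lemma notin_big x m : (sumn [seq idx y | y <- m] < idx x)%N -> x \notin m.
Proof. move=> h; apply/negP => /idx_le; lia. Qed.

Section Z.
Variables (s : bool) (m : mono) (R : wpoly).
Let N := sumn [seq idx y | y <- m].

Lemma z1 i j : (N < i + j)%N -> sp (T1 s i j m) R = 0.
Proof.
move=> h; apply: sp_zc; apply/zc_mulv/zc_mulv/zc_dv1/notin_big.
by rewrite idx_pv.
Qed.

Lemma z2 i j : (N < i)%N || (N < j)%N -> sp (T2 s i j m) R = 0.
Proof.
case/orP => h; apply: sp_zc; apply/zc_mulv; last first.
  by apply/zc_dv/zc_dv1/notin_big; rewrite idx_pv.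
rewrite /dv /=; apply: zc_dv1; apply/negP => /mem_rem; apply/negP.
by apply: notin_big; rewrite idx_pv.
Qed.

Lemma z3 i : (N < i)%N -> sp (T3 s i m) R = 0.
Proof.
move=> h; apply: sp_zc; apply/zc_scalep/zc_mulv/zc_dv1/notin_big => //.
Qed.

Lemma z4 i : (N < i)%N -> sp (T4 s i m) R = 0.
Proof.
move=> h; apply: sp_zc; apply/zc_mulv/zc_dv1/notin_big; rewrite idx_pv; lia.
Qed.
End Z.

Lemma sum_trunc (F : nat -> rat) N M : (N <= M)%N -> (forall k, (N < k)%N -> F k = 0) ->
  \sum_(k <- iota 1 M) F k = \sum_(k <- iota 1 N) F k.
Proof.
move=> NM HF; rewrite -(subnKC NM) iotaD big_cat /=.
rewrite [X in _ + X]big1_seq ?addr0 // => k /andP [_]; rewrite mem_iota => /andP [h _].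
apply: HF; lia.
Qed.

Lemma trunc s M m R : (sumn [seq idx y | y <- m] <= M)%N ->
  sp (Wgen s M m) R = sp (Wmono s m) R.
Proof.
move=> NM; rewrite WmonoE !sp_Wgen; set N := sumn _.
congr (_ + _); last first.
  apply: sum_trunc => // i hi; rewrite z3 ?z4 ?addr0 //.
transitivity (\sum_(i <- iota 1 N) \sum_(j <- iota 1 M)
     (sp (T1 s i j m) R + sp (T2 s i j m) R)).
  apply: sum_trunc => // i hi; apply: big1_seq => j _.
  rewrite z1 ?z2 ?addr0 //; [by rewrite hi | lia].
apply: eq_bigr => i _; apply: sum_trunc => // j hj.
rewrite z1 ?z2 ?addr0 //; [by rewrite hj orbT | lia].
Qed.

Lemma T12 s i j m1 m2 : sp (T1 s i j m1) [:: (1, m2)] = sp (T2 s i j m2) [:: (1, m1)].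
Proof.
rewrite /T1 /T2 !sp_mulv !wt_pv !mul1r [RHS]sp_sym !sp_dvr.
exact: sp_mulv_swap.
Qed.

Lemma T34 s i m1 m2 : sp (T3 s i m1) [:: (1, m2)] = sp (T4 s i m2) [:: (1, m1)].
Proof.
rewrite /T3 /T4 sp_scalep !sp_mulv wt_pv mul1r /=.
congr (_ * _); exact: sp_sym.
Qed.

Lemma Wmono_sym s m1 m2 :
  sp (Wmono s m1) [:: (1, m2)] = sp (Wmono s m2) [:: (1, m1)].
Proof.
set N1 := sumn [seq idx y | y <- m1]; set N2 := sumn [seq idx y | y <- m2].
rewrite -(@trunc s (N1 + N2)) ?leq_addr // -(@trunc s (N1 + N2) m2) ?leq_addl //.
rewrite !sp_Wgen; congr (_ + _).
  apply: eq_bigr => i _; apply: eq_bigr => j _.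
  by rewrite addrC T12 -T12.
apply: eq_bigr => i _; by rewrite addrC T34 -T34.
Qed.

Lemma spW s P Q : sp (W s P) Q = \sum_(t <- P) t.1 * sp (Wmono s t.2) Q.
Proof.
rewrite /W sp_flatten big_map; apply: eq_bigr => t _; exact: sp_scalep.
Qed.

Lemma sp_right P Q : sp P Q = \sum_(b <- Q) b.1 * sp P [:: (1, b.2)].
Proof.
rewrite /sp exchange_big; apply: eq_bigr => b _; rewrite mulr_sumr.
apply: eq_bigr => a _; rewrite big_seq1 /=; ring.
Qed.

Theorem proposition4p5 (np nm : nat) (s : bool) (P1 P2 : wpoly) :
  bihom np nm P1 -> bihom np nm P2 ->
  sp (W s P1) P2 = sp P1 (W s P2).
Proof.
move=> _ _; rewrite [RHS]sp_sym !spW.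
under eq_bigr => t _ do rewrite sp_right mulr_sumr.
under [RHS]eq_bigr => b _ do rewrite sp_right mulr_sumr.
rewrite exchange_big; apply: eq_bigr => b _; apply: eq_bigr => t _.
rewrite Wmono_sym; ring.
Qed.
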